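(* For every $t\ge2$ and $\sigma\in S_t$, the pattern set $\{(\sigma,[t-2])\}$ (the vincular pattern $\sigma_1\cdots\sigma_{t-1}\text{-}\sigma_t$) admits a finite enumeration scheme of depth $t-1$ in which every reversibly deletable set $R_p$ is either $\emptyset$ or $\{1\}$.
   Context: Vincular pattern $(\sigma,X)$, $\sigma\in S_\ell$, $X\subseteq[\ell-1]$: $\pi$ contains it if some subsequence $\pi_{i_1}\cdots\pi_{i_\ell}$ ($i_1<\dots<i_\ell$) is order-isomorphic to $\sigma$ with $i_{x+1}=i_x+1$ for $x\in X$. For $p\in S_k$ and $w\in[n]^k$ with distinct letters order-isomorphic to $p$, $S_n^B(p;w)$ is the set of $B$-avoiding $\pi\in S_n$ with $\pi_i=w_i$ ($i\le k$). Spacing vector $\vec g(n,w)$: $i$-th component $c_i-c_{i-1}-1$, $c_i$ the $i$-th smallest letter of $w$, $c_0=0,c_{k+1}=n+1$. $\vec v\in\mathbb{N}^{k+1}$ is a gap vector for $p$ w.r.t. $B$ if $S_n^B(p;w)=\emptyset$ whenever $\vec g(n,w)\ge\vec v$ componentwise. $d_R$ deletes the entries in positions $R$ and reduces (for words: subtract from each remaining letter the number of deleted letters smaller than it). $R\subseteq[k]$ is reversibly deletable for $p$ w.r.t. $B$ if, for every $n$ and $w$ with $S_n^B(p;w)\ne\emptyset$, $d_R$ is a bijection $S_n^B(p;w)\to S_{n-|R|}^B(d_R(p);d_R(w))$. A child of $p\in S_k$ is any $p'\in S_{k+1}$ with $p'_1\cdots p'_k$ order-isomorphic to $p$. An enumeration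 scheme for $B$ is a set $E$ of triples $(p,G_p,R_p)$, $p$ a permutation, $G_p$ a set of gap vectors for $p$ w.r.t. $B$, $R_p$ a reversibly deletable set for $p$ w.r.t. $B$, such that: $(\epsilon,\emptyset,\emptyset)\in E$ ($\epsilon$ the empty permutation); if $(p,G_p,R_p)\in E$ with $R_p=\emptyset$ and $\vec 0\notin G_p$ then every child of $p$ occurs as the first entry of a triple in $E$; if $R_p\ne\emptyset$ then $d_{R_p}(p)$ occurs as the first entry of a triple in $E$. Its depth is the maximum length of a $p$ occurring in $E$. *)

(* Defs.v *)
(* Permutations/words are sequences of naturals with values
   1..n; positions in patterns, X and R are 1-based as in the paper. *)
From mathcomp Require Import all_boot.
Set Implicit Arguments. Unset Strict Implicit. Unset Printing Implicit Defensive.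

Definition is_perm (s : seq nat) : bool := perm_eq s (iota 1 (size s)).

Definition order_iso (a b : seq nat) : Prop :=
  size a = size b /\
  forall i j, i < size a -> j < size a ->
    (nth 0 a i < nth 0 a j) = (nth 0 b i < nth 0 b j).

Definition vpattern := (seq nat * seq nat)%type.

(* pi contains (sigma, X): indices i_1 < ... < i_l (0-based positions here),
   order-isomorphic to sigma, with i_{x+1} = i_x + 1 for x in X (1-based x). *)
Definition contains (pi : seq nat) (pat : vpattern) : Prop :=
  exists I : seq nat,
    [/\ size I = size pat.1, sorted ltn I, all (fun i => i < size pi) I,
        order_iso (map (nth 0 pi) I) pat.1 &
        forall x, x \in pat.2 -> nth 0 I x = (nth 0 I x.-1).+1].

Definition avoids (B : seq vpattern) (pi : seq nat) : Prop :=
  forall b, b \in B -> ~ contains pi b.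

(* pi in S_n^B(p;w) (w is the prefix, k = size w = size p) *)
Definition SnB (B : seq vpattern) (n : nat) (w : seq nat) (pi : seq nat) : Prop :=
  [/\ size pi = n, is_perm pi, avoids B pi & take (size w) pi = w].

Definition prefix_word (p : seq nat) (n : nat) (w : seq nat) : Prop :=
  [/\ size w = size p, uniq w, all (fun x => 0 < x <= n) w & order_iso w p].

(* spacing vector g(n,w): components c_i - c_{i-1} - 1, i = 1..k+1 *)
Definition gvec (n : nat) (w : seq nat) : seq nat :=
  pairmap (fun a b => b - a - 1) 0 (rcons (sort leq w) n.+1).

Definition is_gap_vector (B : seq vpattern) (p : seq nat) (v : seq nat) : Prop :=
  size v = (size p).+1 /\
  forall n w, prefix_word p n w -> all2 leq v (gvec n w) ->
    forall pi, ~ SnB B n w pi.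

(* d_R: delete entries in (1-based) positions R and reduce *)
Definition dR (R : seq nat) (s : seq nat) : seq nat :=
  let del := [seq nth 0 s i | i <- iota 0 (size s) & i.+1 \in R] in
  let keep := [seq nth 0 s i | i <- iota 0 (size s) & i.+1 \notin R] in
  [seq x - count (fun y => y < x) del | x <- keep].

(* R (a subset of [k], represented as a duplicate-free list) is reversibly
   deletable for p w.r.t. B *)
Definition rev_deletable (B : seq vpattern) (p : seq nat) (R : seq nat) : Prop :=
  [/\ uniq R, all (fun r => 0 < r <= size p) R &
   forall n w, prefix_word p n w -> (exists pi, SnB B n w pi) ->
     [/\ forall pi, SnB B n w pi -> SnB B (n - size R) (dR R w) (dR R pi),
         forall pi1 pi2, SnB B n w pi1 -> SnB B n w pi2 -> dR R pi1 = dR R pi2 -> pi1 = pi2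
       & forall pi', SnB B (n - size R) (dR R w) pi' ->
           exists2 pi, SnB B n w pi & dR R pi = pi']].

Definition is_child (p p' : seq nat) : Prop :=
  size p' = (size p).+1 /\ is_perm p' /\ order_iso (take (size p) p') p.

Definition triple := (seq nat * seq (seq nat) * seq nat)%type.

Definition first_entries (E : seq triple) : seq (seq nat) := [seq e.1.1 | e <- E].

Definition enum_scheme (B : seq vpattern) (E : seq triple) : Prop :=
  [/\ ([::], [::], [::]) \in E,
      forall e, e \in E ->
        [/\ is_perm e.1.1,
            forall v, v \in e.1.2 -> is_gap_vector B e.1.1 v
          & rev_deletable B e.1.1 e.2],
      forall e, e \in E -> e.2 = [::] -> nseq (size e.1.1).+1 0 \notin e.1.2 ->
        forall p', is_child e.1.1 p' -> p' \in first_entries E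
    & forall e, e \in E -> e.2 != [::] -> dR e.2 e.1.1 \in first_entries E].

Definition depth (E : seq triple) : nat := foldr maxn 0 [seq size e.1.1 | e <- E].

(* Main.v *)
Require Import Defs.
From mathcomp Require Import all_boot zify.
Set Implicit Arguments. Unset Strict Implicit. Unset Printing Implicit Defensive.

Definition f1 a x := x - (a < x).
Definition g1 a y := if y < a then y else y.+1.

Lemma filter_true (l : seq nat) : [seq i <- l | true] = l.
Proof. by elim: l => //= x l ->. Qed.

Lemma filter_false (l : seq nat) : [seq i <- l | false] = [::].
Proof. by elim: l. Qed.

Lemma dR_nil s : dR [::] s = s.
Proof.
rewrite /dR /= filter_true filter_false.
rewrite (@eq_map _ _ _ id); last by move=> x /=; rewrite subn0.
by rewrite map_id -/(mkseq _ _) mkseq_nth.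
Qed.

Lemma dR1 a s : dR [:: 1] (a :: s) = map (f1 a) s.
Proof.
rewrite /dR /=.
rewrite (@eq_in_filter _ (fun i => i.+1 \in [:: 1]) pred0); last first.
  by move=> x; rewrite mem_iota inE /= => /andP[H _]; case: x H.
rewrite filter_pred0 (@eq_in_filter _ (fun i => i.+1 \notin [:: 1]) predT); last first.
  by move=> x; rewrite mem_iota inE /= => /andP[H _]; case: x H.
rewrite filter_predT /= -map_comp.
rewrite -(addn0 1) iotaDl -map_comp.
rewrite (@eq_map _ _ _ (f1 a \o nth 0 s)); last first.
  by move=> x /=; rewrite /f1 addn0.
by rewrite map_comp -/(mkseq _ _) mkseq_nth.
Qed.

Lemma fg a y : f1 a (g1 a y) = y.
Proof. rewrite /f1 /g1; case: (ltnP y a) => H; case: ltnP => /= H2; lia. Qed.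

Lemma gf a x : x != a -> g1 a (f1 a x) = x.
Proof. rewrite /f1 /g1 => /negPf; case: (ltnP a x) => H /= Hx; [|rewrite subn0]; case: ltnP; lia. Qed.

Lemma f_mono a x y : x != a -> y != a -> (f1 a x < f1 a y) = (x < y).
Proof. rewrite /f1 => /negPf Hx /negPf Hy; case: (ltnP a x); case: (ltnP a y) => /=; lia. Qed.

Lemma g_mono a x y : (g1 a x < g1 a y) = (x < y).
Proof. rewrite /g1; case: (ltnP x a); case: (ltnP y a) => /=; lia. Qed.

Lemma is_permP s : is_perm s = uniq s && all (fun x => 0 < x <= size s) s.
Proof.
apply/idP/andP.
- move=> H; split; first by rewrite (perm_uniq H) iota_uniq.
  by apply/allP => x; rewrite (perm_mem H) mem_iota; lia.
- case=> U A; apply: uniq_perm => //; first exact: iota_uniq.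
  have [] // := @uniq_min_size _ s (iota 1 (size s)) U.
  + by move=> x /(allP A); rewrite mem_iota; lia.
  + by rewrite size_iota.
Qed.

Lemma perm_del a s : is_perm (a :: s) -> is_perm (map (f1 a) s).
Proof.
rewrite !is_permP /= => /and3P[/andP[aS U] /andP[Ha Ha'] A].
apply/andP; split.
  rewrite map_inj_in_uniq // => x y xs ys E.
  have xa : x != a by apply: contraNneq aS => <-.
  have ya : y != a by apply: contraNneq aS => <-.
  by rewrite -(gf xa) -(gf ya) E.
rewrite all_map size_map; apply/allP => x xs /=.
have xa : x != a by apply: contraNneq aS => <-.
move: (allP A x xs) xa; rewrite /f1 => /= H /eqP xa; case: (ltnP a x) => /= => H2; lia.
Qed.

Lemma perm_ins a s : 0 < a <= (size s).+1 -> is_perm s -> is_perm (a :: map (g1 a) s).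
Proof.
rewrite !is_permP /= => Ha /andP[U A].
apply/andP; split.
  apply/andP; split.
    by apply/mapP => -[y _]; rewrite /g1; case: (ltnP y a); lia.
  rewrite map_inj_uniq // => x y E; by rewrite -(fg a x) E fg.
rewrite size_map Ha /= all_map; apply/allP => x xs /=.
by move: (allP A x xs); rewrite /g1; case: (ltnP x a); lia.
Qed.

Definition occ (pi : seq nat) (pat : vpattern) (I : seq nat) : Prop :=
  [/\ size I = size pat.1, sorted ltn I, all (fun i => i < size pi) I,
      order_iso (map (nth 0 pi) I) pat.1 &
      forall x, x \in pat.2 -> nth 0 I x = (nth 0 I x.-1).+1].

Lemma containsE pi pat : contains pi pat <-> exists I, occ pi pat I.
Proof. by []. Qed.

Lemma order_iso_map h u b : {in u &, forall x y, (h x < h y) = (x < y)} ->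
  order_iso (map h u) b <-> order_iso u b.
Proof.
move=> hm; rewrite /order_iso size_map; split => -[E H]; split => // i j hi hj.
  by rewrite -H ?size_map // !(nth_map 0) // hm // mem_nth.
by rewrite !(nth_map 0) // hm ?mem_nth // H.
Qed.

Lemma occ_map h s pat I : {in s &, forall x y, (h x < h y) = (x < y)} ->
  occ (map h s) pat I <-> occ s pat I.
Proof.
move=> hm; rewrite /occ size_map.
suff E : all (fun i => i < size s) I ->
  (order_iso [seq nth 0 (map h s) i | i <- I] pat.1 <-> order_iso [seq nth 0 s i | i <- I] pat.1).
  by split => -[h1 h2 h3 h4 h5]; split => //; apply/E.
move=> A.
have -> : [seq nth 0 (map h s) i | i <- I] = map h [seq nth 0 s i | i <- I].
  rewrite -map_comp; apply/eq_in_map => i /(allP A) hi /=; exact: nth_map.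
apply: order_iso_map => x y /mapP[i /(allP A) hi ->] /mapP[j /(allP A) hj ->].
by apply: hm; apply: mem_nth.
Qed.

Lemma occ_cons a s pat I : (forall x, x \in pat.2 -> x < size pat.1) ->
  occ (a :: s) pat (map S I) <-> occ s pat I.
Proof.
move=> hX; rewrite /occ size_map all_map -map_comp sorted_map.
have -> : [seq (nth 0 (a :: s) \o succn) i | i <- I] = [seq nth 0 s i | i <- I] by [].
split => -[h1 h2 h3 h4 h5]; split => // x hx.
  have := h5 x hx; have := hX x hx; rewrite -h1 => hx'.
  by rewrite !(nth_map 0) //; [case | apply: leq_ltn_trans hx'; apply: leq_pred].
have := h5 x hx; have := hX x hx; rewrite -h1 => hx'.
by rewrite !(nth_map 0) //; [move=> -> | apply: leq_ltn_trans hx'; apply: leq_pred].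
Qed.

Lemma path_iota_cat i m j : i + m < j -> path ltn i (iota i.+1 m ++ [:: j]).
Proof.
elim: m i => [|m IH] i /=; first by rewrite addn0 andbT.
by move=> h; rewrite ltnSn /=; apply: IH; rewrite addSn -addnS.
Qed.

Lemma nth_iota_cat k j x : x < k -> nth 0 (iota 0 k ++ [:: j]) x = x.
Proof. by move=> h; rewrite nth_cat size_iota h nth_iota. Qed.

Lemma occ_head pi k sigma I : size sigma = k.+2 -> occ pi (sigma, iota 1 k) I ->
  nth 0 I 0 = 0 -> I = iota 0 k.+1 ++ [:: nth 0 I k.+1] /\ k < nth 0 I k.+1.
Proof.
move=> hs [h1 h2 h3 h4 h5] h0 /=.
have hx : forall x, x <= k -> nth 0 I x = x.
  elim=> [//|x IH] hx; rewrite h5 /= ?IH //; last by rewrite mem_iota; lia.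
  by apply: ltnW.
have hI : I = iota 0 k.+1 ++ [:: nth 0 I k.+1].
  apply: (@eq_from_nth _ 0); first by rewrite size_cat size_iota /= h1 hs addn1.
  move=> i; rewrite h1 hs ltnS leq_eqVlt => /orP[/eqP -> | hi].
    by rewrite nth_cat size_iota ltnn subnn.
  by rewrite nth_iota_cat // hx.
split => //.
have H := sorted_ltn_nth ltn_trans 0 h2.
have := H k k.+1; rewrite !inE h1 hs hx //; apply => //.
Qed.

Lemma no_head k sigma pi pi0 w I : size sigma = k.+2 -> size w = k.+1 ->
  is_perm pi -> is_perm pi0 -> size pi = size pi0 ->
  take k.+1 pi = w -> take k.+1 pi0 = w ->
  ~ contains pi0 (sigma, iota 1 k) ->
  occ pi (sigma, iota 1 k) I -> nth 0 I 0 = 0 -> False.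
Proof.
move=> hs hw P P0 hsz t1 t0 nc oc h0.
have [EI hk] := occ_head hs oc h0.
set j := nth 0 I k.+1 in EI hk.
case: oc => h1 h2 h3 h4 h5.
have hj : j < size pi by apply: (allP h3); rewrite EI mem_cat mem_seq1 eqxx orbT.
set v := nth 0 pi j.
have vd : v \in drop k.+1 pi.
  have -> : v = nth 0 (drop k.+1 pi) (j - k.+1) by rewrite nth_drop subnKC.
  by apply: mem_nth; rewrite size_drop ltn_sub2r //; exact: leq_ltn_trans hk hj.
have U : uniq pi by rewrite (perm_uniq P) iota_uniq.
have vw : v \notin w.
  move: U; rewrite -(cat_take_drop k.+1 pi) cat_uniq t1 => /and3P[_ /hasPn H _].
  exact: H.
have v0 : v \in pi0.
  have : v \in pi by apply: mem_nth.
  by rewrite (perm_mem P) (perm_mem P0) hsz.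
have vd0 : v \in drop k.+1 pi0.
  by move: v0; rewrite -{1}(cat_take_drop k.+1 pi0) mem_cat t0 (negPf vw).
set k0 := index v (drop k.+1 pi0).
have hk0 : k0 < size (drop k.+1 pi0) by rewrite index_mem.
have nk0 : nth 0 pi0 (k.+1 + k0) = v by rewrite -nth_drop nth_index.
clearbody k0.
apply: nc; exists (iota 0 k.+1 ++ [:: k.+1 + k0]); split.
- by rewrite size_cat size_iota hs addn1.
- by apply: path_iota_cat; lia.
- move: hk0; rewrite size_drop => hk0.
  apply/allP => x; rewrite mem_cat mem_iota inE => /orP[|/eqP->]; lia.
- suff -> : [seq nth 0 pi0 i | i <- iota 0 k.+1 ++ [:: k.+1 + k0]] = [seq nth 0 pi i | i <- I] by [].
  rewrite EI !map_cat; congr (_ ++ _); last by rewrite /= nk0.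
  apply/eq_in_map => i; rewrite mem_iota /= => hi.
  by rewrite -(nth_take 0 (n0 := k.+1)) // t0 -t1 nth_take.
- move=> x; rewrite mem_iota => hx.
  rewrite !nth_iota_cat //; lia.
Qed.

Lemma avoids1 b pi : avoids [:: b] pi <-> ~ contains pi b.
Proof.
split; first by move=> H; apply: H; rewrite mem_seq1.
by move=> H b'; rewrite mem_seq1 => /eqP ->.
Qed.

Lemma gf_map a s : a \notin s -> map (g1 a) (map (f1 a) s) = s.
Proof.
move=> as_; rewrite -map_comp -[RHS]map_id; apply/eq_in_map => x xs /=.
by apply: gf; apply: contraNneq as_ => <-.
Qed.

Lemma fg_map a s : map (f1 a) (map (g1 a) s) = s.
Proof. by rewrite -map_comp -[RHS]map_id; apply/eq_map => x /=; rewrite fg. Qed.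

Lemma rev_nil B p : rev_deletable B p [::].
Proof.
split => // n w _ _; split.
- by move=> pi; rewrite !dR_nil subn0.
- by move=> pi1 pi2 _ _; rewrite !dR_nil.
- by move=> pi' H; exists pi'; rewrite ?dR_nil ?subn0 in H *.
Qed.

Lemma rev1 k sigma p : size sigma = k.+2 -> size p = k.+1 ->
  rev_deletable [:: (sigma, iota 1 k)] p [:: 1].
Proof.
move=> hs hp; split => //; first by rewrite /= hp.
move=> n w [hw Uw Aw _] [pi0 [sz0 P0 Av0 tk0]].
rewrite hp in hw.
have hX : forall x, x \in (sigma, iota 1 k).2 -> x < size (sigma, iota 1 k).1.
  by move=> x; rewrite /= mem_iota hs; lia.
have nc0 := proj1 (avoids1 _ _) Av0.
case: w hw Uw Aw tk0 => [//|a w'] [hw'] Uw Aw tk0.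
have aw' : a \notin w' by case/andP: Uw.
have [Ha Ha'] : 0 < a /\ a <= n by move: Aw => /= /andP[/andP[]].
have tk00 := tk0; rewrite /= hw' in tk0.
have hsplit : forall pi, SnB [:: (sigma, iota 1 k)] n (a :: w') pi ->
   exists s, [/\ pi = a :: s, a \notin s, size s = n.-1 & take k s = w'].
  move=> [|b s] [sz P _ tk] //.
  rewrite /= hw' in tk; case: tk => Eb tk; subst b.
  exists s; split => //; last by rewrite -sz.
  by move: P; rewrite is_permP /= => /andP[/andP[? _] _].
have [s0 [E0 _ sz0' _]] := hsplit pi0 (And4 sz0 P0 Av0 tk00).
have hn : n = (size s0).+1 by rewrite -sz0 E0.
split.
- move=> pi H; have [s [E as_ szs tks]] := hsplit pi H.
  case: H => _ P Av _; rewrite E !dR1 in P Av *.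
  split.
  + by rewrite size_map szs subn1.
  + exact: perm_del.
  + apply/avoids1 => /containsE [I oc].
    apply: (proj1 (avoids1 _ _) Av); exists (map S I); apply/occ_cons => //.
    apply/(occ_map (h := f1 a)); last exact: oc.
    move=> x y xs ys.
    by apply: f_mono; [apply: contraNneq as_ => <- | apply: contraNneq as_ => <-].
  + by rewrite !size_map hw' -map_take tks.
- move=> pi1 pi2 H1 H2.
  have [s1 [E1 as1 _ _]] := hsplit pi1 H1.
  have [s2 [E2 as2 _ _]] := hsplit pi2 H2.
  rewrite E1 E2 !dR1 => Em.
  by rewrite -(gf_map as1) Em gf_map.
- move=> pi' [sz' P' Av' tk']; rewrite dR1 in sz' tk'.
  rewrite /= subn1 in sz'.
  have P : is_perm (a :: map (g1 a) pi').
    by apply: perm_ins => //; rewrite sz'; lia.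
  have tk : take k.+1 (a :: map (g1 a) pi') = a :: w'.
    rewrite /= -map_take; move: tk'; rewrite size_map hw' => ->.
    by rewrite gf_map.
  exists (a :: map (g1 a) pi'); last by rewrite dR1 fg_map.
  split => //.
  + by rewrite /= size_map sz' hn.
  + apply/avoids1 => /containsE [I oc].
    case h0: (nth 0 I 0 == 0).
      apply: (no_head hs _ P P0 _ tk tk0 nc0 oc (eqP h0)) => //.
        by rewrite /= hw'.
      by rewrite /= size_map sz' sz0 hn.
    case: oc => h1 h2 h3 h4 h5.
    have Ipos : all (fun i => 0 < i) I.
      move: h2 h0 h1; rewrite hs; case: I {h3 h4 h5} => [//|i0 I1] /= h2 h0 _.
      rewrite lt0n h0 /=; apply/allP => x /(allP (order_path_min ltn_trans h2)).
      by apply: leq_ltn_trans.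
    have EI : I = map S (map predn I).
      rewrite -map_comp -[LHS]map_id; apply/eq_in_map => x /(allP Ipos) /=.
      by move=> hx; rewrite prednK.
    apply: (proj1 (avoids1 _ _) Av'); exists (map predn I).
    apply/(occ_map (h := g1 a)); first by move=> x y _ _; apply: g_mono.
    apply/(occ_cons a) => //; rewrite -EI; split => //.
  + by rewrite /= hw'.
Qed.

Definition Pm m := permutations (iota 1 m).

Lemma memPm p m : (p \in Pm m) = is_perm p && (size p == m).
Proof.
rewrite /Pm mem_permutations /is_perm; apply/idP/andP.
  by move=> H; have := perm_size H; rewrite size_iota => E; rewrite E eqxx.
by case=> H /eqP E; rewrite -E.
Qed.

Definition EE k : seq triple :=
  [seq (p, [::], [::]) | p <- flatten [seq Pm m | m <- iota 0 k.+1]] ++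
  [seq (p, [::], [:: 1]) | p <- Pm k.+1].

Lemma memE k e : e \in EE k <->
  (exists p, e = (p, [::], [::]) /\ is_perm p /\ size p <= k) \/
  (exists p, e = (p, [::], [:: 1]) /\ is_perm p /\ size p = k.+1).
Proof.
rewrite mem_cat; split.
  case/orP => [/mapP[p /flatten_mapP[m hm hp] ->] | /mapP[p hp ->]].
    left; exists p; move: hp hm; rewrite memPm mem_iota => /andP[P /eqP ->]; split => //; split => //; lia.
  by right; exists p; move: hp; rewrite memPm => /andP[P /eqP ->].
case => [[p [-> [P hs]]] | [p [-> [P hs]]]]; apply/orP; [left|right]; apply: map_f.
  by apply/flatten_mapP; exists (size p); [rewrite mem_iota; lia | rewrite memPm P eqxx].
by rewrite memPm P hs eqxx.
Qed.

Lemma foldr_le (s : seq nat) m : all (fun x => x <= m) s -> foldr maxn 0 s <= m.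
Proof. by elim: s => //= x s IH /andP[h1 h2]; rewrite geq_max h1 IH. Qed.

Lemma foldr_ge (s : seq nat) m : m \in s -> m <= foldr maxn 0 s.
Proof.
elim: s => //= x s IH; rewrite inE => /orP[/eqP->|h]; rewrite leq_max ?leqnn //.
by rewrite IH // orbT.
Qed.

Theorem mainTheorem7 (t : nat) (sigma : seq nat) :
  2 <= t -> size sigma = t -> is_perm sigma ->
  exists E : seq triple,
    [/\ enum_scheme [:: (sigma, iota 1 (t - 2))] E,
        depth E = t - 1 &
        forall e, e \in E -> e.2 = [::] \/ e.2 = [:: 1]].
Proof.
case: t => [|[|k]] // _ hs _.
have -> : k.+2 - 2 = k by lia.
have -> : k.+2 - 1 = k.+1 by lia.
exists (EE k); split.
- split.
  + by apply/memE; left; exists [::].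
  + move=> e /memE [[p [-> [P _]]]|[p [-> [P hp]]]]; split => //=.
      exact: rev_nil.
    exact: rev1.
  + move=> e /memE [[p [-> [P hp]]]|[p [-> _]]] // _ _ p' [hs' [P' _]].
    rewrite /= in hs'; rewrite /first_entries; case: (leqP (size p') k) => hk.
      by apply/mapP; exists (p', [::], [::]) => //; apply/memE; left; exists p'.
    apply/mapP; exists (p', [::], [:: 1]) => //; apply/memE; right; exists p'; split => //; split => //.
    by apply/anti_leq; rewrite hk hs' ltnS andbT.
  + move=> e /memE [[p [-> _]]|[p [-> [P hp]]]] // _.
    case: p P hp => [//|a s] P [hp].
    rewrite /first_entries; apply/mapP; exists (map (f1 a) s, [::], [::]); last by rewrite dR1.
    by apply/memE; left; exists (map (f1 a) s); split => //; split; [exact: perm_del | rewrite size_map hp].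
- rewrite /depth; apply/eqP; rewrite eqn_leq foldr_le ?foldr_ge //.
    apply/mapP; exists (iota 1 k.+1, [::], [:: 1]); last by rewrite /= size_iota.
    apply/memE; right; exists (iota 1 k.+1); split => //; split; last by rewrite size_iota.
    by rewrite /is_perm size_iota.
  apply/allP => x /mapP[e /memE[[p [-> [_ hp]]]|[p [-> [_ hp]]]] ->] /=.
  by apply: leq_trans hp _.
  by rewrite hp.
- by move=> e /memE[[p [-> _]]|[p [-> _]]]; [left|right].
Qed.
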